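(* For no positive integer $m>1$ and no ordering of its elements is a quadratical quasigroup of order $m$ $(m-1)$-translatable.
   Context: A quadratical quasigroup is a quasigroup $(Q,\cdot)$ satisfying $xy\cdot x=zx\cdot yz$ for all $x,y,z$; equivalently, a groupoid satisfying $x\cdot x=x$, $yx\cdot xy=x$ and $xy\cdot zw=xz\cdot yw$. A finite groupoid with ordering $q_1,\dots,q_n$ of its elements is $k$-translatable ($1\le k<n$) with respect to this ordering if $q_i\cdot q_j=q_{i-1}\cdot q_{j-k}$ for all $i\in\{2,\dots,n\}$, $j\in\{1,\dots,n\}$, indices taken modulo $n$ in $\{1,\dots,n\}$. *)

(* Defs.v *)
From mathcomp Require Import all_boot.
Set Implicit Arguments. Unset Strict Implicit. Unset Printing Implicit Defensive.

Definition quasigroup (T : Type) (op : T -> T -> T) : Prop :=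
  (forall a b : T, exists! x : T, op a x = b) /\
  (forall a b : T, exists! y : T, op y a = b).

Definition quadratical (T : Type) (op : T -> T -> T) : Prop :=
  quasigroup op /\
  forall x y z : T, op (op x y) x = op (op z x) (op y z).

Lemma ord_pos n (i : 'I_n) : 0 < n.
Proof. by case: i => [i Hi]; apply: leq_ltn_trans Hi. Qed.

Definition ord_sub n (i : 'I_n) (k : nat) : 'I_n :=
  Ordinal (ltn_pmod (i + (n - k %% n)) (ord_pos i)).

(* k-translatable w.r.t. the ordering q : 'I_n -> T (indices 0..n-1 here,
   i.e. q_{i+1} of the paper is q i). The condition i in {2..n} becomes
   i in {1..n-1}. *)
Definition translatable (T : Type) (op : T -> T -> T) (n : nat)
    (q : 'I_n -> T) (k : nat) : Prop :=
  [/\ 1 <= k, k < n &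
   forall i j : 'I_n, 0 < i ->
     op (q i) (q j) = op (q (ord_sub i 1)) (q (ord_sub j k))].

(* Main.v *)
Require Import Defs.
From mathcomp Require Import all_boot.
From mathcomp Require Import zify.

Theorem theorem8p5 (m : nat) (T : finType) (op : T -> T -> T) :
  #|T| = m -> 1 < m -> quadratical op ->
  forall q : 'I_m -> T, bijective q -> ~ translatable op q (m - 1).
Proof.
move=> _ Hm [[QL QR] Qd] q [g qK gK] [_ _ Ht].
have Hm0 : 0 < m by apply: ltnW.
pose O k := Ordinal (ltn_pmod k Hm0).
have key : forall n (i : 'I_m), val i = n -> forall j : 'I_m,
    op (q i) (q j) = op (q (O 0)) (q (O (i + j))).
  elim=> [|n IH] i Hi j.
    have -> : i = O 0 by apply: val_inj; rewrite /= Hi mod0n.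
    congr (op _ (q _)); apply: val_inj; rewrite /= mod0n add0n modn_small //.
  have Hi0 : 0 < i by rewrite Hi.
  rewrite (Ht i j Hi0).
  have E1 : ord_sub i 1 = O n.
    apply: val_inj; rewrite /= Hi (modn_small Hm).
    have -> : n.+1 + (m - 1) = m + n by lia.
    by rewrite modnDl modn_small //; have := ltn_ord i; rewrite Hi; lia.
  have E2 : ord_sub j (m - 1) = O j.+1.
    apply: val_inj; rewrite /= (modn_small (m := m - 1)); last by lia.
    congr (_ %% m); lia.
  rewrite E1 E2 (IH (O n)); last first.
    by rewrite /= modn_small //; have := ltn_ord i; rewrite Hi; lia.
  congr (op _ (q _)); apply: val_inj => /=.
  rewrite modnDmr /= (modn_small (m := n)); last by have := ltn_ord i; rewrite Hi; lia.
  by rewrite Hi addnS addSn.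
have comm : forall x y, op x y = op y x.
  move=> x y; rewrite -(gK x) -(gK y) (key _ (g x) erefl) (key _ (g y) erefl).
  congr (op _ (q _)).
  by apply: val_inj; rewrite /= addnC.
have [s sE] : {s : T -> T | forall w, s w = op w w} by exists (fun w => op w w).
have H1 : forall z x, s (op z x) = op (s x) x.
  by move=> z x; rewrite !sE (Qd x x z) (comm x z).
have H2 : forall w x, s w = op (s x) x.
  move=> w x; have [z [Hz _]] := QR x w; rewrite -Hz; exact: H1.
have H3 : forall x, op (s (q (O 0))) x = s (q (O 0)).
  move=> x; have Hs : s (q (O 0)) = s x := etrans (H2 (q (O 0)) x) (esym (H2 x x)).
  rewrite Hs; exact: (esym (H2 x x)).
have [x [_ U]] := QL (s (q (O 0))) (s (q (O 0))).
have E0 := U _ (H3 (q (O 0))).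
have E1 := U _ (H3 (q (O 1))).
have : q (O 0) = q (O 1) by rewrite -E0 -E1.
move/(can_inj qK)/(congr1 val) => /=.
by rewrite mod0n modn_small.
Qed.
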